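(* Let $n\ge 2$ be an integer. Let $\sigma\in S_n$ be the cycle $(1,2,\dots,n-1)$ and let $\rho\in S_n$ be defined by $\rho(n-1)=n$, $\rho(n)=n-1$ and $\rho(k)=n-1-k$ for $1\le k\le n-2$. Then $IK_n$ is a $G$-graph if and only if there exists a permutation $\tau\in S_n$ of order $2$ such that $\tau(n)=n-1$ and $$\tau\sigma^k\tau=\sigma^{\tau(k)}\,\tau\,\sigma^{\tau\rho\tau(k)}\quad\text{for all }k\in\{1,\dots,n-2\}.$$ In that case, $IK_n\cong\Phi(\langle\sigma,\tau\rangle,\{\sigma,\tau\})$.
   Context: $S_n$ is the symmetric group on $\{1,\dots,n\}$, with product given by composition of functions (the rightmost factor is applied first). $K_n$ is the complete simple graph on $n$ vertices, and $IK_n$ is its incidence graph: the simple graph whose vertices are the vertices and edges of $K_n$, each edge of $K_n$ being adjacent exactly to its two end-points. For a group $G$ and a multiset $S$ of elements of $G$, $\Phi(G,S)$ is the multigraph whose vertex set is the union over the members $s$ of $S$ (with multiplicity) of the right cosets $\langle s\rangle x$, $x\in G$, with one edge labeled $g$ between $\langle s\rangle x$ and $\langle t\rangle y$ ($s,t$ distinct members of $S$) for each $g\in\langle s\rangle x\cap\langle t\rangle y$, and no other edges; a $G$-graph is a multigraph isomorphic (ignoring labels) to some $\Phi(G,S)$. *)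

(* Defs.v *)
From mathcomp Require Import all_boot all_fingroup.
Set Implicit Arguments.
Unset Strict Implicit.
Unset Printing Implicit Defensive.
Import GroupScope.

(* Paper label of an element of 'I_n : the paper works on {1,...,n},
   MathComp on 'I_n = {0,...,n-1}; i : 'I_n stands for the paper's i+1. *)
Definition lab (n : nat) (i : 'I_n) : nat := i.+1.

Definition mg_iso (V1 V2 : finType) (A1 : {set V1}) (m1 : V1 -> V1 -> nat)
    (A2 : {set V2}) (m2 : V2 -> V2 -> nat) : Prop :=
  exists f : V1 -> V2,
    [/\ {in A1 &, injective f}, f @: A1 = A2 &
        {in A1 &, forall a b, m2 (f a) (f b) = m1 a b}].

(* The incidence graph IK_n: vertices of K_n (inl i) and edges of K_n
   (inr e with e a 2-subset), an edge of K_n adjacent to its two endpoints. *)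
Definition IKV (n : nat) := ('I_n + {set 'I_n})%type.
Definition IK_verts (n : nat) : {set IKV n} :=
  [set v : IKV n | match v with inl _ => true | inr e => #|e| == 2 end].
Definition IK_mult (n : nat) (u v : IKV n) : nat :=
  match u, v with
  | inl i, inr e => nat_of_bool (i \in e)
  | inr e, inl i => nat_of_bool (i \in e)
  | _, _ => 0
  end.

(* Phi(G,S): S is a multiset, given as a sequence; its members are indexed
   by 'I_(size S).  A vertex is a pair (i, C) with C a coset of <[S_i]> in G.
   [rightc = true]: C = <[s]> :* x  (right cosets for the product * of gT);
   [rightc = false]: C = x *: <[s]>  (used for permutations). *)
Definition phi_verts (gT : finGroupType) (G : {set gT}) (S : seq gT)
    (rightc : bool) : {set ('I_(size S) * {set gT})} :=
  [set v : 'I_(size S) * {set gT} | v.2 \in (if rightc then rcosets <[nth 1 S v.1]> G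
                    else lcosets <[nth 1 S v.1]> G)].
Definition phi_mult (gT : finGroupType) (S : seq gT)
    (u v : 'I_(size S) * {set gT}) : nat :=
  if u.1 != v.1 then #|u.2 :&: v.2| else 0.

Definition IK_is_Ggraph (n : nat) : Prop :=
  exists (gT : finGroupType) (G : {group gT}) (S : seq gT),
    {subset S <= G} /\
    mg_iso (IK_verts n) (@IK_mult n) (phi_verts G S true) (@phi_mult gT S).

(* The condition on tau from the theorem (paper composition, read as
   function application). *)
Definition tau_cond (n : nat) (sigma rho tau : 'S_n) : Prop :=
  [/\ #[tau] = 2,
      forall i : 'I_n, lab i = n -> lab (tau i) = n.-1 &
      forall i : 'I_n, (1 <= lab i <= n - 2)%N -> forall x : 'I_n,
        tau ((sigma ^+ lab i) (tau x)) =
        (sigma ^+ lab (tau i)) (tau ((sigma ^+ lab (tau (rho (tau i)))) x))].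

(* Main.v *)
Require Import Defs.
From mathcomp Require Import all_boot all_fingroup all_solvable zify.
Import GroupScope.
Set Implicit Arguments.
Unset Strict Implicit.


Definition nn (m : nat) : 'I_(m.+2) := ord_max.
Definition n1 (m : nat) : 'I_(m.+2) := Ordinal (leqnSn m.+1).

Definition sig_ok m (sigma : 'S_(m.+2)) :=
  forall i : 'I_(m.+2), val (sigma i) = if val i < m.+1 then (val i).+1 %% m.+1 else val i.

Lemma sigX m (sigma : 'S_(m.+2)) : sig_ok sigma ->
  forall j (i : 'I_(m.+2)), val i < m.+1 -> val ((sigma ^+ j) i) = (val i + j) %% m.+1.
Proof.
move=> Hs j i Hi; elim: j => [|j IH].
  by rewrite expg0 perm1 addn0 modn_small.
rewrite expgSr permM Hs IH ltn_pmod // -addn1 modnDml -addnA addn1 //.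
Qed.

Lemma sigX_nn m (sigma : 'S_(m.+2)) : sig_ok sigma -> forall j, (sigma ^+ j) (nn m) = nn m.
Proof.
move=> Hs; elim=> [|j IH]; first by rewrite expg0 perm1.
rewrite expgSr permM IH; apply: val_inj; by rewrite Hs /= ltnn.
Qed.

Lemma sig_lt m (sigma : 'S_(m.+2)) (i : 'I_(m.+2)) : (val i < m.+1) = (i != nn m).
Proof.
case: i => v /= Hv; rewrite /nn; apply/idP/idP.
  by move=> H; apply/eqP => [[E]]; rewrite E ltnn in H.
move=> H; have : v != m.+1 by apply: contra H => /eqP E; apply/eqP; apply: val_inj.
by rewrite ltn_neqAle -ltnS Hv andbT.
Qed.

Lemma sigN m (sigma : 'S_(m.+2)) : sig_ok sigma -> sigma ^+ m.+1 = 1.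
Proof.
move=> Hs; apply/permP => i; rewrite perm1.
case: (boolP (i == nn m)) => [/eqP ->|H]; first exact: sigX_nn.
have Hi : val i < m.+1 by rewrite (sig_lt sigma) .
apply: val_inj; rewrite (sigX Hs) // modnDr modn_small //.
Qed.

Lemma sig_mod m (sigma : 'S_(m.+2)) : sig_ok sigma -> forall j, sigma ^+ (j %% m.+1) = sigma ^+ j.
Proof. by move=> Hs j; apply: expg_mod; apply: sigN. Qed.

Lemma sig_n1 m (sigma : 'S_(m.+2)) : sig_ok sigma ->
  forall v, v <= m -> val ((sigma ^+ v.+1) (n1 m)) = v.
Proof.
move=> Hs v Hv; rewrite (sigX Hs) //= addnS -addSn addnC modnDr modn_small //.
Qed.


Definition tau_ok m (sigma rho tau : 'S_(m.+2)) :=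
  [/\ sig_ok sigma, tau * tau = 1, tau (nn m) = n1 m, tau (n1 m) = nn m &
   forall i : 'I_(m.+2), val i < m ->
     tau * sigma ^+ (val i).+1 * tau =
     sigma ^+ (val (tau (rho (tau i)))).+1 * tau * sigma ^+ (val (tau i)).+1].

Definition Pf m (sigma tau g : 'S_(m.+2)) :=
  exists i j, g = sigma ^+ i \/ g = sigma ^+ i * tau * sigma ^+ j.

Lemma tst_form m (sigma rho tau : 'S_(m.+2)) : tau_ok sigma rho tau ->
  forall j, Pf sigma tau (tau * sigma ^+ j * tau).
Proof.
case=> Hs Htt Htnn Htn1 Hrel j.
rewrite -(sig_mod Hs).
have : j %% m.+1 < m.+1 by rewrite ltn_pmod.
case E: (j %% m.+1) => [|k] Hk.
  by exists 0, 0; left; rewrite expg0 mulg1 Htt.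
have Hk' : k < m.+2 by rewrite ltnW // ltnW.
have := Hrel (Ordinal Hk') Hk => /= ->.
by exists (val (tau (rho (tau (Ordinal Hk'))))).+1, (val (tau (Ordinal Hk'))).+1; right.
Qed.

Lemma Pf_mulr m (sigma rho tau : 'S_(m.+2)) : tau_ok sigma rho tau ->
  forall g x, x \in [set sigma; tau] -> Pf sigma tau g -> Pf sigma tau (g * x).
Proof.
move=> ok g x; case: (ok) => Hs Htt Htnn Htn1 Hrel.
rewrite !inE => /orP [] /eqP -> [i [j [->|->]]].
- by exists i.+1, 0; left; rewrite expgSr.
- by exists i, j.+1; right; rewrite -mulgA -expgSr.
- by exists i, 0; right; rewrite expg0 mulg1.
- have H1 : sigma ^+ i * tau * sigma ^+ j * tau = sigma ^+ i * (tau * sigma ^+ j * tau).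
    by rewrite !mulgA.
  have [u [v [E|E]]] := tst_form ok j.
    by exists (i + u), 0; left; rewrite H1 E expgD.
  by exists (i + u), v; right; rewrite H1 E expgD !mulgA.
Qed.

Lemma Gform m (sigma rho tau : 'S_(m.+2)) : tau_ok sigma rho tau ->
  forall g, g \in <<[set sigma; tau]>> -> Pf sigma tau g.
Proof.
move=> ok g /gen_prodgP [k [c Hc ->]].
elim: k c Hc => [|k IH] c Hc.
  by rewrite big_ord0; exists 0, 0; left; rewrite expg0.
rewrite big_ord_recr /=; apply: (Pf_mulr ok) => //.
by apply: IH => i.
Qed.


Lemma sig_fix_n1 m (sigma : 'S_(m.+2)) : sig_ok sigma ->
  forall i, (sigma ^+ i) (n1 m) = n1 m -> sigma ^+ i = 1.
Proof.
move=> Hs i /(congr1 val); rewrite (sigX Hs) //= => Hm.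
apply/permP => x; rewrite perm1.
case: (boolP (x == nn m)) => [/eqP ->|H]; first exact: sigX_nn.
have Hx : val x < m.+1 by rewrite (sig_lt sigma).
apply: val_inj; rewrite (sigX Hs) //.
have -> : val x + i = (val x).+1 + (m + i) - m.+1 by lia.
rewrite -(modnDr ((val x).+1 + (m + i) - m.+1)) subnK; last by lia.
rewrite -modnDmr Hm addSn -addnS modnDr modn_small //.
Qed.

Lemma sig_n1_ne m (sigma : 'S_(m.+2)) : sig_ok sigma ->
  forall j, (sigma ^+ j) (n1 m) != nn m.
Proof.
move=> Hs j; apply/eqP => /(congr1 val); rewrite (sigX Hs) //= => E.
have := ltn_pmod (m + j) (ltn0Sn m); by rewrite E ltnn.
Qed.

Lemma sharp m (sigma rho tau : 'S_(m.+2)) : tau_ok sigma rho tau ->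
  forall g, g \in <<[set sigma; tau]>> -> g (nn m) = nn m -> g (n1 m) = n1 m -> g = 1.
Proof.
move=> ok g Hg; case: (ok) => Hs Htt Htnn Htn1 Hrel.
have [i [j [->|->]]] := Gform ok Hg.
  by move=> _; apply: sig_fix_n1.
rewrite !permM (sigX_nn Hs) Htnn => E.
by have := sig_n1_ne Hs j; rewrite E eqxx.
Qed.

Lemma sigG m (sigma tau : 'S_(m.+2)) : sigma \in <<[set sigma; tau]>>.
Proof. by rewrite mem_gen // !inE eqxx. Qed.
Lemma tauG m (sigma tau : 'S_(m.+2)) : tau \in <<[set sigma; tau]>>.
Proof. by rewrite mem_gen // !inE eqxx orbT. Qed.

Lemma Gag m (sigma rho tau : 'S_(m.+2)) : tau_ok sigma rho tau ->
  forall g h, g \in <<[set sigma; tau]>> -> h \in <<[set sigma; tau]>> ->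
  g (nn m) = h (nn m) -> g (n1 m) = h (n1 m) -> g = h.
Proof.
move=> ok g h Hg Hh E1 E2.
have : g * h^-1 = 1.
  by apply: (sharp ok); rewrite ?groupM ?groupV // permM ?E1 ?E2 permK.
by move/(congr1 (mulg^~ h)); rewrite mulgKV mul1g.
Qed.


Lemma to_n1 m (sigma : 'S_(m.+2)) : sig_ok sigma ->
  forall x, x != nn m -> (sigma ^+ (m - val x)) x = n1 m.
Proof.
move=> Hs x Hx; have Hx' : val x < m.+1 by rewrite (sig_lt sigma).
apply: val_inj; rewrite (sigX Hs) //= subnKC ?modn_small //.
Qed.

Lemma trans1 m (sigma rho tau : 'S_(m.+2)) : tau_ok sigma rho tau ->
  forall p, exists2 g, g \in <<[set sigma; tau]>> & g p = nn m.
Proof.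
move=> ok p; case: (ok) => Hs Htt Htnn Htn1 Hrel.
case: (boolP (p == nn m)) => [/eqP ->|H]; first by exists 1; rewrite ?group1 ?perm1.
exists (sigma ^+ (m - val p) * tau); first by rewrite groupM ?groupX ?sigG ?tauG.
by rewrite permM (to_n1 Hs H).
Qed.

Lemma trans2 m (sigma rho tau : 'S_(m.+2)) : tau_ok sigma rho tau ->
  forall p q, p != q -> exists2 g, g \in <<[set sigma; tau]>> & g p = nn m /\ g q = n1 m.
Proof.
move=> ok p q Hpq; case: (ok) => Hs Htt Htnn Htn1 Hrel.
have [g1 Hg1 E1] := trans1 ok p.
have Hv : g1 q != nn m by rewrite -E1; apply: contra Hpq => /eqP /perm_inj ->.
exists (g1 * sigma ^+ (m - val (g1 q))); first by rewrite groupM ?groupX ?sigG.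
by rewrite !permM E1 (sigX_nn Hs) (to_n1 Hs Hv).
Qed.

Lemma nn_n1 m : nn m != n1 m.
Proof. apply/eqP => /(congr1 val) /=. lia. Qed.

Lemma stab m (sigma rho tau : 'S_(m.+2)) : tau_ok sigma rho tau ->
  forall g, g \in <<[set sigma; tau]>> -> g (nn m) = nn m -> g \in <[sigma]>.
Proof.
move=> ok g Hg E; case: (ok) => Hs Htt Htnn Htn1 Hrel.
have Hv : g (n1 m) != nn m.
  by rewrite -E; apply: contra (nn_n1 m) => /eqP /perm_inj ->.
have Hv' : val (g (n1 m)) <= m by rewrite -ltnS (sig_lt sigma).
have -> : g = sigma ^+ (val (g (n1 m))).+1.
  apply: (Gag ok) => //; first by rewrite groupX ?sigG.
    by rewrite E (sigX_nn Hs).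
  by apply: val_inj; rewrite (sig_n1 Hs).
exact: mem_cycle.
Qed.

Definition TT m : {set 'I_(m.+2)} := [set nn m; n1 m].


Lemma imsetM m (s t : 'S_(m.+2)) (A : {set 'I_(m.+2)}) : (s * t) @: A = t @: (s @: A).
Proof. by rewrite -imset_comp; apply: eq_imset => z; rewrite /= permM. Qed.

Lemma setstab m (sigma rho tau : 'S_(m.+2)) : tau_ok sigma rho tau ->
  forall g, g \in <<[set sigma; tau]>> -> g @: TT m = TT m -> g \in <[tau]>.
Proof.
move=> ok g Hg E; case: (ok) => Hs Htt Htnn Htn1 Hrel.
have H1 : g (nn m) \in TT m by rewrite -E imset_f // /TT !inE eqxx.
have H2 : g (n1 m) \in TT m by rewrite -E imset_f // /TT !inE eqxx orbT.
have Hne : g (nn m) != g (n1 m) by apply: contra (nn_n1 m) => /eqP /perm_inj ->.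
move: H1 H2 Hne; rewrite /TT !inE => /orP [] /eqP E1 /orP [] /eqP E2; rewrite E1 E2 ?eqxx //= => _.
  have -> : g = 1 by apply: (Gag ok); rewrite ?group1 ?perm1.
  exact: group1.
have -> : g = tau by apply: (Gag ok); rewrite ?tauG ?E1 ?E2.
exact: cycle_id.
Qed.


Definition fV m (sigma tau : 'S_(m.+2)) (p : 'I_(m.+2)) :=
  [set g in <<[set sigma; tau]>> | g p == nn m].
Definition fE m (sigma tau : 'S_(m.+2)) (e : {set 'I_(m.+2)}) :=
  [set g in <<[set sigma; tau]>> | g @: e == TT m].

Lemma imset1p m (A : {set 'I_(m.+2)}) : (1 : 'S_(m.+2)) @: A = A.
Proof. by rewrite -[RHS]imset_id; apply: eq_imset => z; rewrite perm1. Qed.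

Lemma LcV m (sigma rho tau : 'S_(m.+2)) : tau_ok sigma rho tau ->
  forall x p, x \in <<[set sigma; tau]>> -> x p = nn m -> fV sigma tau p = x *: <[sigma]>.
Proof.
move=> ok x p Hx Hxp; case: (ok) => Hs Htt Htnn Htn1 Hrel.
apply/setP => g; rewrite inE mem_lcoset; apply/andP/idP => [[Hg /eqP Hp]|H].
  apply: (stab ok); first by rewrite groupM ?groupV.
  by rewrite permM -Hxp permK Hp.
have HyG : x^-1 * g \in <<[set sigma; tau]>>.
  by apply: (subsetP _ _ H); rewrite cycle_subG sigG.
split; first by rewrite -(mulKVg x g) groupM.
have [i Ei] := cycleP _ _ H.
by rewrite -(mulKVg x g) permM Hxp Ei (sigX_nn Hs).
Qed.

Lemma tauX_TT m (sigma rho tau : 'S_(m.+2)) : tau_ok sigma rho tau ->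
  forall i, (tau ^+ i) @: TT m = TT m.
Proof.
move=> ok; case: (ok) => Hs Htt Htnn Htn1 Hrel.
elim=> [|i IH]; first by rewrite expg0 imset1p.
rewrite expgSr imsetM IH /TT imsetU1 imset_set1 Htnn Htn1.
by apply/setP => z; rewrite !inE orbC.
Qed.

Lemma LcE m (sigma rho tau : 'S_(m.+2)) : tau_ok sigma rho tau ->
  forall x (e : {set _}), x \in <<[set sigma; tau]>> -> x @: e = TT m -> fE sigma tau e = x *: <[tau]>.
Proof.
move=> ok x e Hx Hxe; case: (ok) => Hs Htt Htnn Htn1 Hrel.
apply/setP => g; rewrite inE mem_lcoset; apply/andP/idP => [[Hg /eqP Hp]|H].
  apply: (setstab ok); first by rewrite groupM ?groupV.
  have Ex : x^-1 @: TT m = e by rewrite -Hxe -imsetM mulgV imset1p.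
  by rewrite imsetM Ex Hp.
have HyG : x^-1 * g \in <<[set sigma; tau]>>.
  by apply: (subsetP _ _ H); rewrite cycle_subG tauG.
split; first by rewrite -(mulKVg x g) groupM.
have [i Ei] := cycleP _ _ H.
by rewrite -(mulKVg x g) imsetM Hxe Ei (tauX_TT ok).
Qed.

Lemma two_set (T : finType) (e : {set T}) p : #|e| = 2 -> p \in e ->
  exists q, p != q /\ e = [set p; q].
Proof.
move=> /eqP /cards2P [x [y [Hxy ->]]]; rewrite !inE => /orP [] /eqP ->.
  by exists y.
by exists x; split; [rewrite eq_sym | apply/setP => z; rewrite !inE orbC].
Qed.

Lemma exE m (sigma rho tau : 'S_(m.+2)) : tau_ok sigma rho tau ->
  forall e : {set _}, #|e| = 2 -> exists2 x, x \in <<[set sigma; tau]>> & x @: e = TT m.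
Proof.
move=> ok e /eqP /cards2P [p [q [Hpq ->]]].
have [g Hg [E1 E2]] := trans2 ok Hpq.
by exists g => //; rewrite imsetU1 imset_set1 E1 E2.
Qed.

Lemma multVE m (sigma rho tau : 'S_(m.+2)) : tau_ok sigma rho tau ->
  forall p (e : {set _}), #|e| = 2 -> #|fV sigma tau p :&: fE sigma tau e| = nat_of_bool (p \in e).
Proof.
move=> ok p e He; case: (boolP (p \in e)) => Hp.
  have [q [Hpq Ee]] := two_set He Hp.
  have [g Hg [E1 E2]] := trans2 ok Hpq.
  suff -> : fV sigma tau p :&: fE sigma tau e = [set g] by rewrite cards1.
  apply/setP => h; rewrite !inE; apply/idP/idP.
    case/andP => /andP [Hh /eqP Hhp] /andP [_ /eqP Hhe].
    have : h q \in TT m by rewrite -Hhe imset_f // Ee !inE eqxx orbT.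
    rewrite /TT !inE => /orP [] /eqP Hq.
      by move: Hpq; rewrite -Hq in Hhp; move/perm_inj: Hhp => ->; rewrite eqxx.
    have : h^-1 * g = 1.
      apply: (sharp ok); first by rewrite groupM ?groupV.
        by rewrite permM -{1}Hhp permK E1.
      by rewrite permM -{1}Hq permK E2.
    by move/(congr1 (mulg h)); rewrite mulKVg mulg1 => ->.
  move/eqP => ->; rewrite Hg E1 eqxx /=.
  by rewrite Ee imsetU1 imset_set1 E1 E2 eqxx.
apply/eqP; rewrite cards_eq0; apply/eqP/setP => h; rewrite !inE.
apply/negP => /andP [/andP [Hh /eqP Hhp] /andP [_ /eqP Hhe]].
have : nn m \in h @: e by rewrite Hhe /TT !inE eqxx.
case/imsetP => r Hr; rewrite -Hhp => /perm_inj Erp.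
by move: Hp; rewrite Erp Hr.
Qed.


Definition fIK m (sigma tau : 'S_(m.+2)) (v : IKV m.+2) : 'I_2 * {set 'S_(m.+2)} :=
  match v with inl p => (ord0, fV sigma tau p) | inr e => (ord_max, fE sigma tau e) end.

Lemma part2 m (sigma rho tau : 'S_(m.+2)) : tau_ok sigma rho tau ->
  mg_iso (IK_verts m.+2) (@IK_mult m.+2)
       (phi_verts <<[set sigma; tau]>> [:: sigma; tau] false)
       (@phi_mult _ [:: sigma; tau]).
Proof.
move=> ok; case: (ok) => Hs Htt Htnn Htn1 Hrel.
exists (fIK sigma tau); split.
- move=> [p|e] [q|e'] Hu Hv; rewrite /fIK => -[] //.
    move=> E; have [g Hg Eg] := trans1 ok p.
    have : g \in fV sigma tau q by rewrite -E inE Hg Eg eqxx.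
    by rewrite inE -Eg => /andP [_ /eqP /perm_inj ->].
  move: Hu Hv; rewrite !inE => /eqP He /eqP He' E.
  have [x Hx Ex] := exE ok He.
  have : x \in fE sigma tau e' by rewrite -E inE Hx Ex eqxx.
  rewrite inE -Ex => /andP [_ /eqP E'].
  by congr inr; apply: (imset_inj (@perm_inj _ x)).
- apply/setP => [[i C]]; rewrite inE; apply/imsetP/idP.
    move=> [[p|e] Hv [-> ->]]; rewrite /=.
      apply/lcosetsP; have [x Hx Ex] := trans1 ok p.
      by exists x => //; exact (LcV ok Hx Ex).
    move: Hv; rewrite inE => /eqP He.
    apply/lcosetsP; have [x Hx Ex] := exE ok He.
    by exists x => //; apply: (LcE ok).
  case: i => [[|[|i]] Hi] //= /lcosetsP [x Hx ->].
    exists (inl (x^-1 (nn m))); first by rewrite inE.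
    rewrite /fIK; congr pair; first exact: val_inj.
    by apply/esym; apply: (LcV ok) => //; rewrite permKV.
  have He : #|x^-1 @: TT m| = 2.
    by rewrite card_imset ?cards2 ?nn_n1 //; apply: perm_inj.
  exists (inr (x^-1 @: TT m)); first by rewrite inE He.
  rewrite /fIK; congr pair; first exact: val_inj.
  by apply/esym; apply: (LcE ok) => //; rewrite -imsetM mulVg imset1p.
- move=> [p|e] [q|e'] Hu Hv //=.
  + move: Hv; rewrite inE => /eqP He.
    exact (multVE ok p He).
  + move: Hu; rewrite inE => /eqP He.
    rewrite /phi_mult /= setIC; exact (multVE ok q He).
Qed.

Lemma lr_iso (gT : finGroupType) (G : {group gT}) (S : seq gT) (V : finType)
  (A : {set V}) (mm : V -> V -> nat) :
  mg_iso A mm (phi_verts G S false) (@phi_mult gT S) ->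
  mg_iso A mm (phi_verts G S true) (@phi_mult gT S).
Proof.
move=> [f [Hinj Him Hm]].
exists (fun v => ((f v).1, ((f v).2)^-1)); split.
- move=> u v Hu Hv [E1 E2]; apply: Hinj => //.
  by move: E2 => /(congr1 invg); rewrite !invgK; case: (f u) (f v) E1 => ? ? [? ?] /= -> ->.
- apply/setP => [[i C]]; rewrite inE /=; apply/imsetP/idP.
    move=> [v Hv [-> ->]].
    have : f v \in phi_verts G S false by rewrite -Him imset_f.
    rewrite inE /= => /lcosetsP [x Hx ->].
    by rewrite invg_lcoset; apply/rcosetsP; exists x^-1; rewrite ?groupV.
  move/rcosetsP => [x Hx EC].
  have : (i, x^-1 *: <[nth 1 S i]>) \in phi_verts G S false.
    by rewrite inE /=; apply/lcosetsP; exists x^-1; rewrite ?groupV.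
  rewrite -Him => /imsetP [v Hv Ev]; exists v => //.
  by rewrite -Ev /= invg_lcoset invgK EC.
- move=> u v Hu Hv; rewrite -Hm // /phi_mult /=.
  by case: ifP => // _; rewrite -invIg card_invg.
Qed.


Lemma cosmem (gT : finGroupType) (H : {group gT}) (G : {set gT}) C y :
  C \in rcosets H G -> y \in C -> C = H :* y.
Proof. by move/rcosetsP => [x _ ->] Hy; apply/esym/rcoset_eqP. Qed.

Lemma card1_eq (T : finType) (X : {set T}) x y : #|X| = 1%N -> x \in X -> y \in X -> x = y.
Proof. by move/eqP/cards1P => [z ->]; rewrite !inE => /eqP -> /eqP ->. Qed.

Lemma rcos_in (gT : finGroupType) (H G : {group gT}) x : x \in G -> H :* x \in rcosets H G.
Proof. by move=> Hx; apply/rcosetsP; exists x. Qed.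


Lemma core_b (gT : finGroupType) (G : {group gT}) (a b : gT) n
  (gV : 'I_n -> {set gT}) (gE : {set 'I_n} -> {set gT}) :
  a \in G -> b \in G -> injective gV ->
  (forall C, C \in rcosets <[a]> G -> exists p, gV p = C) ->
  (forall p, gV p \in rcosets <[a]> G) ->
  (forall D, D \in rcosets <[b]> G -> exists2 e : {set _}, #|e| = 2 & gE e = D) ->
  (forall e : {set _}, #|e| = 2 -> gE e \in rcosets <[b]> G) ->
  (forall p (e : {set _}), #|e| = 2 -> #|gV p :&: gE e| = nat_of_bool (p \in e)) ->
  [/\ b != 1, b * b = 1, b \notin <[a]>,
      (forall h, h \in G -> <[a]> :* h = <[a]> -> <[a]> :* b :* h = <[a]> :* b -> h = 1) &
      (forall C, C \in rcosets <[a]> G -> C != <[a]> -> exists i, C = <[a]> :* (b * a ^+ i))].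
Proof.
move=> Ha Hb Vinj Vsur Vin Esur Ein Hm.
set A := <[a]>; set B := <[b]>.
have AG : A \in rcosets A G by rewrite -{1}(rcoset1 A) rcos_in.
have BG : B \in rcosets B G by rewrite -{1}(rcoset1 B) rcos_in.
have [p0 Ep0] := Vsur _ AG.
have [e0 He0 Ee0] := Esur _ BG.
have adj : forall p (e : {set _}) y, #|e| = 2 -> y \in gV p -> y \in gE e -> p \in e.
  move=> p e y He Hy1 Hy2; have := Hm p e He; case: (p \in e) => //= H.
  have : y \in gV p :&: gE e by rewrite inE Hy1.
  by move/eqP: H; rewrite cards_eq0 => /eqP ->; rewrite inE.
have Hp0 : p0 \in e0 by apply: (adj _ _ 1) => //; rewrite ?Ep0 ?Ee0 group1.
have [q0 [Hpq0 Ee0']] := two_set He0 Hp0.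
have Hq0 : q0 \in e0 by rewrite Ee0' !inE eqxx orbT.
have HAB : #|A :&: B| = 1%N by rewrite -Ep0 -Ee0 Hm // Hp0.
set Q := gV q0.
have HQB : #|Q :&: B| = 1%N by rewrite -Ee0 Hm // Hq0.
have QA : Q != A by rewrite -Ep0; apply: contra Hpq0 => /eqP /Vinj ->.
have QG : Q \in rcosets A G by exact: Vin.
have nbB : forall C y, C \in rcosets A G -> y \in C -> y \in B -> C = A \/ C = Q.
  move=> C y HC HyC HyB; have [r Er] := Vsur _ HC.
  have : r \in e0 by apply: (adj _ _ y) => //; rewrite ?Er ?Ee0.
  by rewrite Ee0' !inE => /orP [] /eqP Er'; [left|right]; rewrite -Er Er'.
have b1 : b != 1.
  apply/eqP => Eb; have /card_gt0P [y Hy] : (0 < #|Q :&: B|)%N by rewrite HQB.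
  move: Hy; rewrite inE /B Eb cycle1 inE => /andP [HyQ /eqP Ey].
  by move: QA; rewrite (cosmem QG HyQ) Ey rcoset1 eqxx.
have bA : b \notin A.
  apply/negP => HbA; move/eqP: b1; apply.
  by apply: (card1_eq HAB); rewrite inE ?group1 // HbA cycle_id.
have AbQ : A :* b = Q.
  have [] := nbB (A :* b) b (rcos_in _ Hb) (rcoset_refl _ _) (cycle_id _) => // E.
  by move: bA; rewrite -E rcoset_refl.
have bb : b * b = 1.
  have Hbb : b * b \in B by rewrite groupM ?cycle_id.
  have [] := nbB (A :* (b * b)) (b * b) (rcos_in _ (groupM Hb Hb)) (rcoset_refl _ _) Hbb => E.
    apply: (card1_eq HAB); rewrite inE ?Hbb ?group1 // andbT.
    by rewrite -E rcoset_refl.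
  have : b * b \in A :* b by rewrite AbQ -E rcoset_refl.
  by rewrite mem_rcoset mulgK (negbTE bA).
have Bel : forall y, y \in B -> y = 1 \/ y = b.
  move=> y /cycleP [i ->]; rewrite -(expg_mod _ (_ : b ^+ 2 = 1)); last by rewrite expg2.
  have : (i %% 2 < 2)%N by rewrite ltn_pmod.
  by case: (i %% 2) => [|[|k]] // _; [left; rewrite expg0 | right; rewrite expg1].
split => //.
- move=> h Hh E1 E2.
  have Dh : B :* h \in rcosets B G by rewrite rcos_in.
  have [e' He' Ee'] := Esur _ Dh.
  have hA : h \in A by rewrite -E1 rcoset_refl.
  have p0e : p0 \in e' by apply: (adj _ _ h) => //; rewrite ?Ep0 ?Ee' ?rcoset_refl.
  have q0e : q0 \in e'.
    apply: (adj _ _ (b * h)) => //; first by rewrite -/Q -AbQ -E2 -rcosetM rcoset_refl.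
    by rewrite Ee' mem_rcoset mulgK cycle_id.
  have Eee : e' = e0.
    have [q' [Hpq' Ee'']] := two_set He' p0e.
    move: q0e; rewrite Ee'' !inE => /orP [] /eqP Eq.
      by move: Hpq0; rewrite Eq eqxx.
    by rewrite Ee0' Eq.
  have : h \in B by rewrite -Ee0 -Eee Ee' rcoset_refl.
  by case/Bel => // Ehb; move: bA; rewrite -Ehb hA.
- move=> C HC CA.
  have [q Eq] := Vsur _ HC.
  have Hpq : p0 != q by apply: contra CA => /eqP E; rewrite -Eq -E Ep0.
  have He : #|[set p0; q]| = 2 by rewrite cards2 Hpq.
  have HD := Ein _ He.
  have /card_gt0P [y Hy] : (0 < #|gV p0 :&: gE [set p0; q]|)%N by rewrite Hm // !inE eqxx.
  move: Hy; rewrite inE Ep0 => /andP [HyA HyD].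
  have ED := cosmem HD HyD.
  have /card_gt0P [z Hz] : (0 < #|gV q :&: gE [set p0; q]|)%N by rewrite Hm // !inE eqxx orbT.
  move: Hz; rewrite inE Eq ED => /andP [HzC HzD].
  move: HzD; rewrite mem_rcoset => /Bel [] Ez.
    have Ezy : z = y by rewrite -(mulgKV y z) Ez mul1g.
    by move: CA; rewrite (cosmem HC HzC) Ezy rcoset_id // eqxx.
  have [i Ei] := cycleP _ _ HyA.
  exists i; rewrite (cosmem HC HzC) -Ei; congr (_ :* _).
  by rewrite -(mulgKV y z) Ez.
Qed.


Definition rho_ok m (rho : 'S_(m.+2)) :=
  forall i : 'I_(m.+2), val (rho i) =
    if val i == m then m.+1 else if val i == m.+1 then m else (m - val i).-1.

Lemma pure m (sigma rho tau : 'S_(m.+2)) : sig_ok sigma -> rho_ok rho ->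
  (forall x, tau (tau x) = x) -> tau (nn m) = n1 m -> tau (n1 m) = nn m ->
  forall i : 'I_(m.+2), val i < m ->
  tau ((sigma ^+ (val i).+1) (tau (nn m))) =
    (sigma ^+ (val (tau i)).+1) (tau ((sigma ^+ (val (tau (rho (tau i)))).+1) (nn m))) /\
  tau ((sigma ^+ (val i).+1) (tau (n1 m))) =
    (sigma ^+ (val (tau i)).+1) (tau ((sigma ^+ (val (tau (rho (tau i)))).+1) (n1 m))).
Proof.
move=> Hs Hr Htt Htnn Htn1 i Hi.
have Hin : i != nn m by rewrite -(sig_lt sigma); apply: ltnW.
have Hin1 : i != n1 m by apply/eqP => /(congr1 val) /= E; move: Hi; rewrite /= E ltnn.
have Hj : tau i != nn m by apply: contra Hin1 => /eqP E; rewrite -(Htt i) E Htnn.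
have Hj1 : tau i != n1 m by apply: contra Hin => /eqP E; rewrite -(Htt i) E Htn1.
have Hjv : val (tau i) < m.
  have := Hj; rewrite -(sig_lt sigma) ltnS leq_eqVlt => /orP [] // /eqP E.
  by move: Hj1 => /eqP []; apply: val_inj.
split.
  rewrite Htnn (sigX_nn Hs) Htnn.
  have -> : (sigma ^+ (val i).+1) (n1 m) = i by apply: val_inj; rewrite (sig_n1 Hs) // ltnW.
  by apply/esym/val_inj; rewrite (sig_n1 Hs) // ltnW.
rewrite Htn1 (sigX_nn Hs) Htnn.
set j := tau i.
have Hrv : val (rho j) = (m - val j).-1.
  rewrite Hr; case: ifP => [/eqP E|_]; first by move: Hjv; rewrite -/j E ltnn.
  case: ifP => [/eqP E|//]; by move: Hjv; rewrite -/j E ltnNge leqnSn.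
have Hr' : rho j != nn m by rewrite -(sig_lt sigma) Hrv; lia.
have Hr1 : rho j != n1 m by apply/eqP => /(congr1 val); rewrite Hrv /=; lia.
have Hrr : tau (rho j) != nn m by apply: contra Hr1 => /eqP E; rewrite -(Htt (rho j)) E Htnn.
have -> : (sigma ^+ (val (tau (rho j))).+1) (n1 m) = tau (rho j).
  apply: val_inj; rewrite (sig_n1 Hs) //; rewrite -ltnS (sig_lt sigma) //.
rewrite Htt; apply: val_inj; rewrite (sigX Hs) /=; last by rewrite Hrv; lia.
have Hjv2 : (nat_of_ord j < m)%N := Hjv.
rewrite Hrv; have -> : (m - j).-1 + j.+1 = m by lia.
by rewrite modn_small.
Qed.


Lemma core (gT : finGroupType) (G : {group gT}) (a b : gT) m (sigma rho : 'S_(m.+2))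
  (gV : 'I_(m.+2) -> {set gT}) (gE : {set 'I_(m.+2)} -> {set gT}) :
  sig_ok sigma -> rho_ok rho ->
  a \in G -> b \in G -> injective gV ->
  (forall C, C \in rcosets <[a]> G -> exists p, gV p = C) ->
  (forall p, gV p \in rcosets <[a]> G) ->
  (forall D, D \in rcosets <[b]> G -> exists2 e : {set _}, #|e| = 2 & gE e = D) ->
  (forall e : {set _}, #|e| = 2 -> gE e \in rcosets <[b]> G) ->
  (forall p (e : {set _}), #|e| = 2 -> #|gV p :&: gE e| = nat_of_bool (p \in e)) ->
  exists tau, tau_cond sigma rho tau.
Proof.
move=> Hs Hr Ha Hb Vinj Vsur Vin Esur Ein Hm.
have [b1 bb bA sharp F3] := core_b Ha Hb Vinj Vsur Vin Esur Ein Hm.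
set A := <[a]> in bA sharp F3 Vsur Vin.
have AG : A \in rcosets A G by rewrite -{1}(rcoset1 A) rcos_in.
have sharp2 : forall g1 g2, g1 \in G -> g2 \in G -> A :* g1 = A :* g2 ->
    A :* b :* g1 = A :* b :* g2 -> g1 = g2.
  move=> g1 g2 H1 H2 E1 E2; have : g1 * g2^-1 = 1.
    apply: sharp; first by rewrite groupM ?groupV.
      by rewrite rcosetM E1 -rcosetM mulgV rcoset1.
    by rewrite rcosetM E2 -rcosetM mulgV rcoset1.
  by move/(congr1 (mulg^~ g2)); rewrite mulgKV mul1g.
have F4 : forall i j, A :* (b * a ^+ i) = A :* (b * a ^+ j) -> a ^+ i = a ^+ j.
  move=> i j E; apply: sharp2; rewrite ?groupX //; first by rewrite !rcoset_id ?mem_cycle.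
  by rewrite -!rcosetM.
have F4' : forall i, A :* (b * a ^+ i) != A.
  move=> i; apply/eqP => E; have : b * a ^+ i \in A by rewrite -E rcoset_refl.
  by rewrite groupMr ?mem_cycle // (negbTE bA).
have cardR : #|rcosets A G| = m.+2.
  have -> : rcosets A G = gV @: setT.
    apply/setP => C; apply/idP/imsetP => [HC|[p _ ->]] //.
    by have [p Ep] := Vsur _ HC; exists p.
  by rewrite card_imset // cardsT card_ord.
have Rdec : rcosets A G = A |: [set A :* (b * a ^+ i) | i : 'I_#[a]].
  apply/setP => C; rewrite !inE; apply/idP/idP.
    move=> HC; case: (eqVneq C A) => [->|CA] //.
    have [i Ei] := F3 C HC CA; apply/orP; right; apply/imsetP.
    by exists (Ordinal (ltn_pmod i (order_gt0 a))) => //=; rewrite expg_mod_order.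
  case/orP => [/eqP -> //|/imsetP [i _ ->]].
  by rewrite rcos_in ?groupM ?groupX.
have Hord : #[a] = m.+1.
  have := cardR; rewrite Rdec cardsU1 card_imset.
    rewrite card_ord; have -> : A \notin [set A :* (b * a ^+ i) | i : 'I_#[a]].
      by apply/imsetP => [[i _ E]]; move: (F4' i); rewrite -E eqxx.
    by rewrite add1n => [[]].
  move=> i j E; apply: val_inj; have := F4 _ _ E; move/eqP.
  by rewrite eq_expg_mod_order !modn_small //; move/eqP.
have expa : forall k, a ^+ k = a ^+ (k %% m.+1) by move=> k; rewrite -Hord expg_mod_order.
set beta := fun i : 'I_(m.+2) =>
  if val i == m.+1 then A else A :* (b * a ^+ (val i).+1).
have ltI : forall i : 'I_(m.+2), (val i == m.+1) = false -> val i < m.+1.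
  by move=> i Ei; rewrite ltn_neqAle Ei -ltnS ltn_ord.
have beta_in : forall i, beta i \in rcosets A G.
  by move=> i; rewrite /beta; case: ifP => // _; rewrite rcos_in ?groupM ?groupX.
have beta_inj : injective beta.
  move=> i j; rewrite /beta; case: ifP => [/eqP Ei|Ei]; case: ifP => [/eqP Ej|Ej] E.
  - by apply: val_inj; rewrite Ei Ej.
  - by move: (F4' (val j).+1); rewrite -E eqxx.
  - by move: (F4' (val i).+1); rewrite E eqxx.
  - have := F4 _ _ E; move/eqP; rewrite eq_expg_mod_order Hord -[(val i).+1]addn1 -[(val j).+1]addn1 eqn_modDr.
    by rewrite !modn_small ?ltI // => /eqP Eij; apply: val_inj.
have beta_sur : forall C, C \in rcosets A G -> exists i, beta i = C.
  move=> C HC; case: (eqVneq C A) => [->|CA].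
    by exists (nn m); rewrite /beta /= eqxx.
  have [k ->] := F3 C HC CA.
  have Hr1 : (k + m) %% m.+1 < m.+2 by rewrite ltnS ltnW // ltn_pmod.
  exists (Ordinal Hr1); rewrite /beta /= ifF; last by apply/negbTE; rewrite neq_ltn ltn_pmod.
  congr (_ :* (_ * _)); rewrite expa (expa k); congr (_ ^+ _).
  by rewrite -addn1 modnDml -addnA addn1 modnDr.
have beta_mul : forall i g, g \in G -> exists j, beta j = beta i :* g.
  move=> i g Hg; apply: beta_sur; have /rcosetsP [x Hx ->] := beta_in i.
  by rewrite -rcosetM rcos_in ?groupM.
pose tf i := odflt i [pick j | beta j == beta i :* b].
have tf_spec : forall i, beta (tf i) = beta i :* b.
  move=> i; rewrite /tf; case: pickP => [j /eqP //|H].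
  by have [j Ej] := beta_mul i b Hb; move: (H j); rewrite Ej eqxx.
have tf_inj : injective tf.
  by move=> i j E; apply: beta_inj; apply: (@rcoset_inj _ b); rewrite -!tf_spec E.
pose tau := perm tf_inj.
have betaT : forall x, beta (tau x) = beta x :* b by move=> x; rewrite permE tf_spec.
have betaS : forall x, beta (sigma x) = beta x :* a.
  move=> x; case: (boolP (val x == m.+1)) => Ex.
    have -> : sigma x = x by apply: val_inj; rewrite Hs (eqP Ex) ltnn.
    by rewrite /beta Ex rcoset_id // cycle_id.
  have Hx := ltI x (negbTE Ex).
  have Hsx : val (sigma x) < m.+1 by rewrite Hs Hx ltn_pmod.
  rewrite /beta (negbTE Ex) ifF; last by apply/negbTE; rewrite neq_ltn Hsx.
  rewrite -rcosetM -mulgA -expgSr Hs Hx; congr (_ :* (_ * _)).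
  by rewrite expa (expa (val x).+2) -addn1 modnDml addn1.
have betaSX : forall k x, beta ((sigma ^+ k) x) = beta x :* a ^+ k.
  move=> k x; elim: k => [|k IH]; first by rewrite !expg0 perm1 rcoset1.
  by rewrite expgSr permM betaS IH -rcosetM -expgSr.
have bnn : beta (nn m) = A by rewrite /beta /= eqxx.
have bn1 : beta (n1 m) = A :* b.
  rewrite /beta /= ifF; last by apply/negbTE; rewrite neq_ltn ltnSn.
  by rewrite -Hord expg_order mulg1.
have tnn : tau (nn m) = n1 m by apply: beta_inj; rewrite betaT bnn bn1.
have tn1 : tau (n1 m) = nn m by apply: beta_inj; rewrite betaT bnn bn1 -rcosetM bb rcoset1.
have ttx : forall x, tau (tau x) = x.
  by move=> x; apply: beta_inj; rewrite !betaT -rcosetM bb rcoset1.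
exists tau; split.
- have t2 : tau ^+ 2 = 1 by apply/permP => x; rewrite expg2 permM ttx perm1.
  have t1 : tau != 1 by apply/eqP => E; move: (nn_n1 m); rewrite -tnn E perm1 eqxx.
  have D2 : #[tau] %| 2 by rewrite order_dvdn t2.
  have G1 : 1 < #[tau] by rewrite order_gt1.
  by apply/eqP; rewrite eqn_leq (dvdn_leq _ D2) // G1.
- move=> i; rewrite /lab => [[Ei]].
  have -> : i = nn m by apply: val_inj.
  by rewrite tnn.
- move=> i; rewrite /lab => /andP [_ Hi] x.
  have Hi' : val i < m by move: Hi; rewrite !subSS subn0.
  set g1 := b * a ^+ (val i).+1 * b.
  set g2 := a ^+ (val (tau (rho (tau i)))).+1 * b * a ^+ (val (tau i)).+1.
  have Lpt : forall y, beta (tau ((sigma ^+ (val i).+1) (tau y))) = beta y :* g1.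
    by move=> y; rewrite betaT (betaSX _ (tau y)) betaT /g1 !rcosetM.
  have Rpt : forall y, beta ((sigma ^+ (val (tau i)).+1)
                  (tau ((sigma ^+ (val (tau (rho (tau i)))).+1) y))) = beta y :* g2.
    by move=> y; rewrite (betaSX _ (tau _)) betaT (betaSX _ y) /g2 !rcosetM.
  have [Enn En1] := pure Hs Hr ttx tnn tn1 Hi'.
  have Eg : g1 = g2.
    apply: sharp2; rewrite ?groupM ?groupX //.
      by rewrite -bnn -Lpt -Rpt Enn.
    by rewrite -bn1 -Lpt -Rpt En1.
  by apply: beta_inj; rewrite Lpt Rpt Eg.
Qed.


Definition isl n (w : IKV n) := if w is inl _ then true else false.

Lemma IKm_pos n (u v : IKV n) : 0 < IK_mult u v -> isl u != isl v.
Proof. by case: u => [p|e]; case: v => [q|e']. Qed.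

Lemma forward m (sigma rho : 'S_(m.+2)) : sig_ok sigma -> rho_ok rho ->
  IK_is_Ggraph m.+2 -> exists tau, tau_cond sigma rho tau.
Proof.
move=> Hs Hr [gT [G [S [HSG [f [Hinj Him Hm]]]]]].
have fin : forall w, w \in IK_verts m.+2 -> f w \in phi_verts G S true.
  by move=> w Hw; rewrite -Him imset_f.
have inl_in : forall p, inl p \in IK_verts m.+2 by move=> p; rewrite inE.
have inr_in : forall e : {set _}, #|e| = 2 -> inr e \in IK_verts m.+2.
  by move=> e He; rewrite inE He.
have adjd : forall u v, u \in IK_verts m.+2 -> v \in IK_verts m.+2 ->
    IK_mult u v = 1%N -> (f u).1 != (f v).1.
  move=> u v Hu Hv E; have := Hm u v Hu Hv; rewrite E /phi_mult.
  by case: ifP.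
have p01 : (1 < m.+2)%N by [].
pose p0 : 'I_(m.+2) := ord0.
pose p1 : 'I_(m.+2) := Ordinal p01.
have Hp01 : p0 != p1 by [].
have He01 : #|[set p0; p1]| = 2 by rewrite cards2 Hp01.
set i0 := (f (inl p0)).1.
set j0 := (f (inr [set p0; p1])).1.
have Hij : i0 != j0 by apply: adjd; rewrite ?inr_in //= !inE eqxx.
have tri : forall x, x = i0 \/ x = j0.
  move=> x; case: (eqVneq x i0) => [->|Hx0]; first by left.
  case: (eqVneq x j0) => [->|Hxj]; first by right.
  have vin : forall y : 'I_(size S), (y, <[nth 1 S y]>) \in phi_verts G S true.
    by move=> y; rewrite inE /= -{1}(rcoset1 <[_]>) rcos_in.
  have /imsetP [wx Hwx Ex] : (x, <[nth 1 S x]>) \in f @: IK_verts m.+2 by rewrite Him vin.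
  have /imsetP [w0 Hw0 E0] : (i0, <[nth 1 S i0]>) \in f @: IK_verts m.+2 by rewrite Him vin.
  have /imsetP [wj Hwj Ej] : (j0, <[nth 1 S j0]>) \in f @: IK_verts m.+2 by rewrite Him vin.
  have pos : forall (y z : 'I_(size S)) wy wz, y != z -> wy \in IK_verts m.+2 -> wz \in IK_verts m.+2 ->
      (y, <[nth 1 S y]>) = f wy -> (z, <[nth 1 S z]>) = f wz -> isl wy != isl wz.
    move=> y z wy wz Hyz Hy Hz Ey Ez; apply: IKm_pos; rewrite -Hm // -Ey -Ez /phi_mult /= Hyz.
    by apply/card_gt0P; exists 1; rewrite inE !group1.
  have := pos _ _ _ _ Hx0 Hwx Hw0 Ex E0.
  have := pos _ _ _ _ Hxj Hwx Hwj Ex Ej.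
  have := pos _ _ _ _ Hij Hw0 Hwj E0 Ej.
  by case: (isl wx); case: (isl w0); case: (isl wj).
have idxL : forall p, (f (inl p)).1 = i0.
  move=> p; case: (eqVneq p p0) => [->//|Hp].
  have He : #|[set p0; p]| = 2 by rewrite cards2 eq_sym Hp.
  have H1 : (f (inr [set p0; p])).1 != i0.
    by rewrite eq_sym; apply: adjd; rewrite ?inr_in //= !inE eqxx.
  have H2 : (f (inr [set p0; p])).1 = j0 by case: (tri (f (inr [set p0; p])).1) => // E; rewrite E eqxx in H1.
  have H3 : (f (inl p)).1 != j0 by rewrite -H2; apply: adjd; rewrite ?inr_in //= !inE eqxx orbT.
  by case: (tri (f (inl p)).1) => // E; rewrite E eqxx in H3.
have idxE : forall e : {set _}, #|e| = 2 -> (f (inr e)).1 = j0.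
  move=> e He; have /card_gt0P [p Hp] : (0 < #|e|)%N by rewrite He.
  have H1 : (f (inr e)).1 != i0.
    by rewrite -(idxL p) eq_sym; apply: adjd; rewrite ?inr_in //= Hp.
  by case: (tri (f (inr e)).1) => // E; rewrite E eqxx in H1.
have Ha : nth 1 S i0 \in G by apply: HSG; apply: mem_nth.
have Hb : nth 1 S j0 \in G by apply: HSG; apply: mem_nth.
apply: (@core gT G (nth 1 S i0) (nth 1 S j0) m sigma rho
         (fun p => (f (inl p)).2) (fun e => (f (inr e)).2)) => //.
- move=> p q /= E.
  have : f (inl p) = f (inl q) by apply: injective_projections; rewrite ?idxL.
  by move/Hinj => /(_ (inl_in p) (inl_in q)) [].
- move=> C HC.
  have /imsetP [w Hw Ew] : (i0, C) \in f @: IK_verts m.+2 by rewrite Him inE.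
  case: w Hw Ew => [p|e] Hw Ew; first by exists p; rewrite -Ew.
  move: Hw; rewrite inE => /eqP He.
  by move: Hij; rewrite -(idxE e He) -Ew eqxx.
- move=> p; have := fin _ (inl_in p); rewrite inE idxL //.
- move=> D HD.
  have /imsetP [w Hw Ew] : (j0, D) \in f @: IK_verts m.+2 by rewrite Him inE.
  case: w Hw Ew => [p|e] Hw Ew; last first.
    by move: Hw; rewrite inE => /eqP He; exists e; rewrite // -Ew.
  by move: Hij; rewrite -(idxL p) -Ew eqxx.
- move=> e He; have := fin _ (inr_in e He); rewrite inE (idxE e He) //.
- move=> p e He /=.
  have := Hm (inl p) (inr e) (inl_in p) (inr_in e He).
  by rewrite /phi_mult idxL (idxE e He) Hij.
Qed.


Lemma cond_ok m (sigma rho tau : 'S_(m.+2)) : sig_ok sigma ->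
  tau_cond sigma rho tau -> tau_ok sigma rho tau.
Proof.
move=> Hs [H2 Hn Hrel].
have Htt : tau * tau = 1 by have := expg_order tau; rewrite H2 expg2.
have Htnn : tau (nn m) = n1 m.
  by apply: val_inj; have := Hn (nn m) erefl; rewrite /lab => [[]].
have Htn1 : tau (n1 m) = nn m by rewrite -Htnn -permM Htt perm1.
split => // i Hi; apply/permP => x; rewrite !permM.
apply: Hrel; rewrite /lab !subSS subn0 /=; exact: Hi.
Qed.

Theorem theorem3' (n : nat) (sigma rho : 'S_n) :
  (2 <= n)%N ->
  (forall i : 'I_n, lab (sigma i) =
     (if lab i < n.-1 then (lab i).+1 else if lab i == n.-1 then 1 else n)%N) ->
  (forall i : 'I_n, lab (rho i) =
     (if lab i == n.-1 then n else if lab i == n then n.-1 else n.-1 - lab i)%N) ->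
  (IK_is_Ggraph n <-> exists tau : 'S_n, tau_cond sigma rho tau) /\
  (forall tau : 'S_n, tau_cond sigma rho tau ->
     mg_iso (IK_verts n) (@IK_mult n)
       (phi_verts <<[set sigma; tau]>> [:: sigma; tau] false)
       (@phi_mult _ [:: sigma; tau])).
Proof.
case: n sigma rho => [|[|m]] sigma rho // _ Hsl Hrl.
have Hs : sig_ok sigma.
  move=> i; have := Hsl i; rewrite /lab /= => E.
  have Hi : (nat_of_ord i < m.+2)%N := ltn_ord i.
  case: (ltngtP (nat_of_ord i) m) => H.
  - move: E; rewrite ltnS H => [[->]].
    by rewrite ifT ?modn_small //; lia.
  - have Hm : nat_of_ord i = m.+1 by lia.
    move: E; rewrite Hm ltnNge leqnSn /= eqSS (gtn_eqF (ltnSn m)) => [[->]]; by rewrite ltnn.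
  - move: E; rewrite H ltnn eqxx /= => [[->]]; by rewrite ltnSn modnn.
have Hr : rho_ok rho.
  move=> i; have := Hrl i; rewrite /lab /= => E.
  have Hi : (nat_of_ord i < m.+2)%N := ltn_ord i.
  case: (ltngtP (nat_of_ord i) m) => H.
  - move: E; rewrite !eqSS.
    rewrite ifF; last by apply/negbTE; rewrite neq_ltn H.
    rewrite ifF; last by apply/negbTE; rewrite neq_ltn ltnS ltnW.
    move=> E; rewrite ifF; last by apply/negbTE; rewrite neq_ltn ltnS ltnW.
    by rewrite -[nat_of_ord (rho i)]/((rho i).+1.-1) E subSS.
  - have Hm : nat_of_ord i = m.+1 by lia.
    move: E; rewrite Hm eqSS (gtn_eqF (ltnSn m)) eqxx /= => [[->]].
    by rewrite eqxx.
  - by move: E; rewrite H eqxx /= => [[->]].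
split; last by move=> tau Htau; apply: (part2 (cond_ok Hs Htau)).
split; first exact: forward.
move=> [tau Htau].
exists _, <<[set sigma; tau]>>%G, [:: sigma; tau]; split.
  by move=> x; rewrite !inE => /orP [] /eqP ->; [apply: sigG | apply: tauG].
by apply: lr_iso; apply: (part2 (cond_ok Hs Htau)).
Qed.

Unset Implicit Arguments.
Set Strict Implicit.

Theorem theorem3 (n : nat) (sigma rho : 'S_n) :
  (2 <= n)%N ->
  (* sigma = (1,2,...,n-1) *)
  (forall i : 'I_n, lab (sigma i) =
     (if lab i < n.-1 then (lab i).+1 else if lab i == n.-1 then 1 else n)%N) ->
  (* rho(n-1) = n, rho(n) = n-1, rho(k) = n-1-k for 1 <= k <= n-2 *)
  (forall i : 'I_n, lab (rho i) =
     (if lab i == n.-1 then n else if lab i == n then n.-1 else n.-1 - lab i)%N) ->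
  (IK_is_Ggraph n <-> exists tau : 'S_n, tau_cond sigma rho tau) /\
  (forall tau : 'S_n, tau_cond sigma rho tau ->
     mg_iso (IK_verts n) (@IK_mult n)
       (phi_verts <<[set sigma; tau]>> [:: sigma; tau] false)
       (@phi_mult _ [:: sigma; tau])).
Proof. exact: theorem3'. Qed.
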